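(* Let $X$ be a finite alphabet, $\#$ a symbol not in $X$, and $X^\# = X \cup \{\#\}$. Let $w \in (\overline{X^\#})^*$ be a word representing the identity in the polycyclic monoid $P(X^\#)$, and suppose $w = uv$. Then there exists a factorisation $v = st$ such that (i) either $t = \epsilon$ or $t$ begins with a negative generator, and (ii) the word $u \# s \#^{-1} t$ also represents the identity in $P(X^\#)$.
   Context: For an alphabet $Y$, $\overline{Y} = \{y, y^{-1} : y \in Y\}$; letters of $Y$ are positive generators and letters $y^{-1}$ negative generators. The polycyclic monoid $P(Y)$ is the monoid of partial functions on $Y^*$ (composed left to right: $fg$ means apply $f$ then $g$) generated by $y: z \mapsto zy$ (defined everywhere) and $y^{-1}: zy \mapsto z$ (defined on $Y^*y$), $y \in Y$; a word over $\overline{Y}$ represents the identity of $P(Y)$ exactly when it can be reduced to the empty word by successively deleting factors $yy^{-1}$ with $y \in Y$. $\epsilon$ denotes the empty word. *)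

(* Defs.v *)
From mathcomp Require Import all_boot.
From Stdlib Require Import Relations.

Set Implicit Arguments.
Unset Strict Implicit.
Unset Printing Implicit Defensive.

Inductive gen (Y : Type) : Type :=
  | Pos : Y -> gen Y
  | Neg : Y -> gen Y.

Inductive red_step (Y : Type) : seq (gen Y) -> seq (gen Y) -> Prop :=
  | RedStep (a b : seq (gen Y)) (y : Y) :
      red_step (a ++ [:: Pos y; Neg y] ++ b) (a ++ b).

(* w represents the identity of the polycyclic monoid P(Y) iff it reduces
   to the empty word by successively deleting factors y y^{-1}. *)
Definition rep_identity (Y : Type) (w : seq (gen Y)) : Prop :=
  clos_refl_trans _ (@red_step Y) w [::].

(* X^# = X ∪ {#}, with # = None a fresh symbol not in X. *)
Definition sharp (X : Type) : option X := None.

(* Main.v *)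
Require Import Defs.
From mathcomp Require Import all_boot.
From Stdlib Require Import Relations.

Set Implicit Arguments.
Unset Strict Implicit.
Section Run.
Variable Y : eqType.

Fixpoint run (st : seq Y) (w : seq (gen Y)) : option (seq Y) :=
  match w with
  | [::] => Some st
  | Pos y :: w' => run (y :: st) w'
  | Neg y :: w' => match st with
                   | x :: st' => if x == y then run st' w' else None
                   | [::] => None
                   end
  end.

Lemma run_cat st a b : run st (a ++ b) = obind (run^~ b) (run st a).
Proof.
elim: a st => [|[y|y] a IH] st //=.
case: st => [|x st] //; case: (x == y) => //.
Qed.

Lemma run_lift st st' b s : run st s = Some st' -> run (st ++ b) s = Some (st' ++ b).
Proof.
elim: s st => [|[y|y] s IH] st /=.
- by case=> ->.
- exact: IH.
- by case: st => [|x st] //=; case: (x == y) => //; apply: IH.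
Qed.

Lemma rt_run a b : clos_refl_trans _ (@red_step Y) a b -> forall st, run st a = run st b.
Proof.
elim => //.
  move=> x y [] a0 b0 z st; rewrite !run_cat; case: (run st a0) => //= st'.
  by rewrite eqxx.
by move=> x y z _ H1 _ H2 st; rewrite H1 H2.
Qed.

Lemma run_rt st st' w : run st w = Some st' ->
  clos_refl_trans _ (@red_step Y) (map (@Pos Y) (rev st) ++ w) (map (@Pos Y) (rev st')).
Proof.
elim: w st => [|[y|y] w IH] st /=.
- by case=> ->; rewrite cats0; apply: rt_refl.
- move/IH; rewrite rev_cons map_rcons -cats1 -catA //.
- case: st => [|x st] //; case: eqP => // -> /IH H.
  apply: rt_trans H; apply: rt_step.
  rewrite rev_cons map_rcons -cats1 -catA /=.
  exact: (RedStep (map (@Pos Y) (rev st)) w y).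
Qed.

Lemma split_max w m : exists s t m', w = s ++ t /\ run m s = Some m' /\
  (t = [::] \/ exists y t', t = Neg y :: t' /\ run m' [:: Neg y] = None).
Proof.
elim: w m => [|[y|y] w IH] m.
- by exists [::], [::], m; split=> //; split=> //; left.
- have [s [t [m' [-> [H1 H2]]]]] := IH (y :: m).
  by exists (Pos y :: s), t, m'.
- case E: (run m [:: Neg y]).
  + move: E; case: m => [|x m] //=; case: eqP => // -> _.
    have [s [t [m' [-> [H1 H2]]]]] := IH m.
    by exists (Neg y :: s), t, m'; rewrite /= eqxx.
  + exists [::], (Neg y :: w), m; split=> //; split=> //; right; by exists y, w.
Qed.

End Run.

Theorem lemma4p9 (X : finType) (w u v : seq (gen (option X))) :
  rep_identity w -> w = u ++ v ->
  exists s t : seq (gen (option X)),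
    v = s ++ t /\
    (t = [::] \/ exists (y : option X) (t' : seq (gen (option X))), t = Neg y :: t') /\
    rep_identity (u ++ [:: Pos (sharp X)] ++ s ++ [:: Neg (sharp X)] ++ t).
Proof.
move=> Hw Ew.
have Rw : run [::] w = Some [::] by rewrite (rt_run Hw).
have [s [t [m' [Ev [Hs Ht]]]]] := split_max v [::].
rewrite Ew run_cat in Rw.
case Eu: (run [::] u) Rw => [sig|] //= Rv.
have Hs' := run_lift (sig) Hs; rewrite /= in Hs'.
rewrite Ev run_cat Hs' /= in Rv.
have Hm : m' = [::].
  case: Ht => [Et | [y [t' [Et Hn]]]]; subst t.
    by case: m' Hs Hs' Rv.
  case: m' Hs Hs' Rv Hn => [|x m] //= _ _.
  by case: eqP.
subst m'.
exists s, t; split=> //; split.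
  by case: Ht => [->|[y [t' [-> _]]]]; [left|right; exists y, t'].
apply: (@run_rt _ [::] [::]).
rewrite !run_cat Eu /= run_cat.
have := run_lift (sharp X :: sig) Hs; rewrite /= => ->.
by [].
Qed.
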